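(* Let $\Gamma$ be any messageless secret-key code over the alphabet $\{0,1\}$ with codeword space $\{0,1\}^n$, $n\ge 1$, and let $\delta\in(0,1)$. If $\Gamma$ satisfies $\mathcal{F}^{\mathrm{ind}}_{\alpha n}$-tamper detection for $\alpha=(1+\delta)/2$, then $\Gamma$ does not satisfy soundness.
   Context: A messageless secret-key code over alphabet $\Sigma$ with codeword space $\Sigma^n$ is a triple of polynomial-time algorithms $\Gamma=(\mathsf{KGen},\mathsf{Enc},\mathsf{Dec})$: $\mathsf{KGen}(1^\lambda)$ is randomized and outputs a secret key $sk$; $\mathsf{Enc}(sk)$ (possibly randomized) outputs a codeword $\gamma\in\Sigma^n$; $\mathsf{Dec}(sk,\gamma)$ is deterministic and outputs one of $\mathtt{valid},\mathtt{invalid},\mathtt{tampered}$. A function $\nu(\lambda)$ is negligible, written $\mathsf{negl}(\lambda)$, if $\nu(\lambda)=o(\lambda^{-c})$ for every $c>0$. Soundness: for every fixed $\hat\gamma\in\Sigma^n$, $\Pr[\mathsf{Dec}(sk,\hat\gamma)\neq\mathtt{invalid} : sk\leftarrow\mathsf{KGen}(1^\lambda)]\le\mathsf{negl}(\lambda)$. $\mathcal{F}$-tamper detection, for a family $\mathcal{F}$ of (possibly randomized) functions $f:\Sigma^n\to\Sigma^n$: for every $f\in\mathcal{F}$, $\Pr[\mathsf{Dec}(sk,\tilde\gamma)\neq\mathtt{tampered}\wedge\tilde\gamma\neq\gamma : sk\leftarrow\mathsf{KGen}(1^\lambda);\ \gamma\leftarrow\mathsf{Enc}(sk);\ \tilde\gamma\leftarrow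 f(\gamma)]\le\mathsf{negl}(\lambda)$. $\mathcal{F}^{\mathrm{ind}}_{\alpha n}$ denotes the family of independent-tampering functions with rate $\alpha$: randomized length-preserving maps $f:\Sigma^n\to\Sigma^n$ that act independently on each coordinate, each coordinate being modified with probability at most $\alpha$. In particular (for $\Sigma=\{0,1\}$) it contains the map that, independently for each position $i$, replaces $\gamma_i$ by a uniformly random bit with probability $1/2$ and leaves it unchanged with probability $1/2$. *)

(* Defs.v *)
(* Probabilities are real numbers in an
   arbitrary realType R; all randomized algorithms are modelled as finitely
   supported distributions (finite sample spaces). *)
From HB Require Import structures.
From mathcomp Require Import all_boot all_order all_algebra.
From mathcomp Require Import all_classical all_reals.
From mathcomp Require Import exp.
Set Implicit Arguments. Unset Strict Implicit. Unset Printing Implicit Defensive.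
Import Order.TTheory GRing.Theory Num.Theory.
Local Open Scope ring_scope.

Definition word (m : nat) := {ffun 'I_m -> bool}.

Definition is_distr (R : realType) (T : finType) (p : T -> R) : Prop :=
  (forall t, 0 <= p t) /\ \sum_(t : T) p t = 1.

Inductive outcome := valid | invalid | tampered.

Definition is_tampered (o : outcome) : bool := if o is tampered then true else false.
Definition is_invalid (o : outcome) : bool := if o is invalid then true else false.

Definition negl (R : realType) (nu : nat -> R) : Prop :=
  forall c : R, 0 < c -> forall eps : R, 0 < eps ->
    exists N : nat, forall lam : nat, (N <= lam)%N ->
      `|nu lam| <= eps * ((lam%:R : R) `^ (- c)).

(* A messageless secret-key code over {0,1} with codeword length n lam, key
   space K lam, key generation distribution kgen lam, (randomized) encoder
   enc lam sk (a distribution on codewords) and deterministic decoder. *)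
Record mlcode (R : realType) := MLCode {
  clen : nat -> nat;
  ckey : nat -> finType;
  ckgen : forall lam, ckey lam -> R;
  cenc : forall lam, ckey lam -> word (clen lam) -> R;
  cdec : forall lam, ckey lam -> word (clen lam) -> outcome
}.

Definition well_formed (R : realType) (G : mlcode R) : Prop :=
  forall lam, is_distr (@ckgen R G lam) /\
              forall sk, is_distr (@cenc R G lam sk).

Definition sound (R : realType) (G : mlcode R) : Prop :=
  forall hat : forall lam, word (clen G lam),
    negl (fun lam => \sum_(sk : ckey G lam)
            @ckgen R G lam sk * (~~ is_invalid (@cdec R G lam sk (hat lam)))%:R).

(* A randomized map f : {0,1}^m -> {0,1}^m is given by its transition
   probabilities f x y = Pr[f(x) = y]. *)
Definition tamper (R : realType) (m : nat) := word m -> word m -> R.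

Definition indep_tamper (R : realType) (alpha : R) (m : nat) (f : tamper R m) : Prop :=
  exists g : 'I_m -> bool -> bool -> R,
    (forall i b, is_distr (g i b)) /\
    (forall i b, g i b (~~ b) <= alpha) /\
    (forall x y, f x y = \prod_(i < m) g i (x i) (y i)).

Definition tamper_fail (R : realType) (G : mlcode R) (lam : nat)
    (f : tamper R (clen G lam)) : R :=
  \sum_(sk : ckey G lam) @ckgen R G lam sk *
   \sum_(c : word (clen G lam)) @cenc R G lam sk c *
    \sum_(c' : word (clen G lam)) f c c' *
      ((~~ is_tampered (@cdec R G lam sk c')) && (c' != c))%:R.

Definition tamper_detecting (R : realType) (alpha : R) (G : mlcode R) : Prop :=
  forall f : forall lam, tamper R (clen G lam),
    (forall lam, indep_tamper alpha (f lam)) ->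
    negl (fun lam => @tamper_fail R G lam (f lam)).

(* Main.v *)
Require Import Defs.
From HB Require Import structures.
From mathcomp Require Import all_boot all_order all_algebra.
From mathcomp Require Import all_classical all_reals.
From mathcomp Require Import exp.
From mathcomp Require Import ring lra.
Import Order.TTheory GRing.Theory Num.Theory.
Local Open Scope ring_scope.

Section Aux.
Variable R : realType.

Lemma sum_u (n : nat) : \sum_(c : word n) ((2:R)^-1)^+n = 1.
Proof.
rewrite sumr_const card_ffun card_bool card_ord.
rewrite -[LHS]mulr_natr natrX -exprMn.
by rewrite mulVf ?expr1n // pnatr_eq0.
Qed.

Lemma u_le (n : nat) : (1 <= n)%N -> ((2:R)^-1)^+n <= 2^-1.
Proof.
case: n => // n _; rewrite exprS -[X in _ <= X]mulr1 ler_wpM2l //.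
  by rewrite invr_ge0.
by rewrite exprn_ile1 // ?invr_ge0 // invf_le1 // ler1n.
Qed.

Lemma pow_bound (lam : nat) : (1 <= lam)%N -> (lam%:R : R) `^ (- 1) <= 1.
Proof.
move=> h; rewrite powRN powRr1 ?ler0n // invf_le1 ?ler1n //.
by rewrite ltr0n.
Qed.

End Aux.

Theorem mainTheorem2 (R : realType) (G : mlcode R) (delta : R) :
  well_formed G ->
  (forall lam, (1 <= clen G lam)%N) ->
  0 < delta < 1 ->
  tamper_detecting ((1 + delta) / 2) G ->
  ~ sound G.
Proof.
move=> wf hn /andP[d0 d1] TD SD.
pose u (lam : nat) : R := ((2:R)^-1)^+(clen G lam).
pose f : forall lam, tamper R (clen G lam) := fun lam _ _ => u lam.
have hf : forall lam, indep_tamper ((1 + delta) / 2) (f lam).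
  move=> lam; exists (fun _ _ _ => (2:R)^-1); split; [|split].
  - move=> i b; split; first by move=> _; rewrite invr_ge0.
    by rewrite big_bool /= -mulr2n -[LHS]mulr_natr mulVf // pnatr_eq0.
  - move=> i b; rewrite -[X in X <= _]mul1r ler_pM2r ?invr_gt0 //.
    by rewrite -{1}[1:R]addr0 lerD2l ltW.
  - by move=> x y; rewrite prodr_const card_ord.
have NT := TD f hf.
pose S lam (c : word (clen G lam)) := \sum_(sk : ckey G lam)
            @ckgen R G lam sk * (~~ is_invalid (@cdec R G lam sk c))%:R.
pose A lam := \sum_(c : word (clen G lam)) u lam * S lam c.
have ex : forall lam, exists c, A lam <= S lam c.
  move=> lam; apply/not_existsP => /= hc.
  have hlt : forall c, S lam c < A lam by move=> c; rewrite ltNge; apply/negP/hc.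
  have : A lam < \sum_(c : word (clen G lam)) u lam * A lam.
    apply: ltr_sum; first by apply/hasP; exists [ffun=> true]; rewrite ?mem_index_enum.
    by move=> c _; rewrite ltr_pM2l // exprn_gt0 // invr_gt0.
  by rewrite -mulr_suml sum_u mul1r ltxx.
pose hat lam := proj1_sig (cid (ex lam)).
have hatP : forall lam, A lam <= S lam (hat lam) by move=> lam; exact: proj2_sig (cid (ex lam)).
have key : forall lam, 2^-1 <= A lam + tamper_fail (f lam).
  move=> lam; have [wk we] := wf lam; have [k0 k1] := wk.
  have -> : A lam = \sum_(sk : ckey G lam) @ckgen R G lam sk *
       \sum_(c : word (clen G lam)) u lam * (~~ is_invalid (@cdec R G lam sk c))%:R.
    rewrite /A /S; under eq_bigr do rewrite mulr_sumr.
    rewrite exchange_big /=; apply: eq_bigr => sk _; rewrite mulr_sumr.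
    by apply: eq_bigr => c _; rewrite mulrCA.
  rewrite /tamper_fail -big_split /=.
  apply: (@le_trans _ _ (\sum_(sk : ckey G lam) @ckgen R G lam sk * (1 - u lam))).
    rewrite -mulr_suml k1 mul1r.
    have hu : u lam <= 2^-1 by apply: u_le.
    lra.
  apply: ler_sum => sk _; rewrite -mulrDr ler_wpM2l //.
  have [e0 e1] := we sk.
  set X := \sum_(c' : word (clen G lam)) _.
  have hX : X = \sum_(c : word (clen G lam)) @cenc R G lam sk c * X.
    by rewrite -mulr_suml e1 mul1r.
  have h1 : 1 - u lam = \sum_(c : word (clen G lam)) @cenc R G lam sk c * (1 - u lam).
    by rewrite -mulr_suml e1 mul1r.
  rewrite h1 hX -big_split /=.
  apply: ler_sum => c _; rewrite -mulrDr ler_wpM2l //.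
  rewrite /X -big_split /=.
  have hc : 1 - u lam = \sum_(c' : word (clen G lam)) (u lam - u lam * (c' == c)%:R).
    rewrite sumrB sum_u (bigD1 c) //= eqxx mulr1 big1 ?addr0 //.
    by move=> c' /negbTE ->; rewrite mulr0.
  rewrite hc; apply: ler_sum => c' _; rewrite /f -mulrDr -[X in X - _]mulr1 -mulrBr.
  rewrite ler_wpM2l ?exprn_ge0 ?invr_ge0 //.
  by case: (@cdec R G lam sk c') => /=; case: eqP => _ /=; lra.
have SN := SD hat.
have h8 : (0:R) < 8^-1 by rewrite invr_gt0.
have [N1 HN1] := SN 1 ltr01 _ h8.
have [N2 HN2] := NT 1 ltr01 _ h8.
pose lam := maxn N1 (maxn N2 1).
have l1 : (N1 <= lam)%N by rewrite leq_maxl.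
have l2 : (N2 <= lam)%N by rewrite /lam (leq_trans _ (leq_maxr _ _)) ?leq_maxl.
have l3 : (1 <= lam)%N by rewrite /lam (leq_trans _ (leq_maxr _ _)) ?leq_maxr.
have pb := @pow_bound R _ l3.
have b1 := HN1 _ l1; have b2 := HN2 _ l2.
have c1 : S lam (hat lam) <= 8^-1.
  apply: le_trans (ler_norm _) (le_trans b1 _).
  by rewrite -[X in _ <= X]mulr1 ler_wpM2l // ltW.
have c2 : tamper_fail (f lam) <= 8^-1.
  apply: le_trans (ler_norm _) (le_trans b2 _).
  by rewrite -[X in _ <= X]mulr1 ler_wpM2l // ltW.
have := le_trans (key lam) (lerD (hatP lam) c2).
have := lerD c1 (lexx (8^-1 : R)).
move=> h1 h2; have := le_trans h2 h1.
apply/negP; rewrite -ltNge.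
lra.
Qed.
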